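(* Let $U$ be a countably infinite universe and let $\mathcal{C}=(L_1,L_2,\ldots)$ be a countable collection of languages over $U$. For every finite $n$, there exists an algorithm $\mathcal{A}$ that non-uniformly generates from $\mathcal{C}$, with generation times $t(L_1),t(L_2),\ldots$ (where $t(L_i)=t_{\mathcal{A}}(L_i)$), such that the following holds: every algorithm $\mathcal{G}$ with $t_{\mathcal{G}}(L_i)<t(L_i)$ for some $i\le n$ satisfies $t_{\mathcal{G}}(L_j)>t(L_j)$ for some other index $j\neq i$ with $j\le n$.
   Context: A language is an infinite subset of $U$. A collection $\mathcal{C}=(L_1,L_2,\ldots)$ is a sequence of languages; repetitions are allowed and entries are distinguished by their index. An enumeration of a language $L$ is a sequence $x_1,x_2,\ldots$ with $x_t\in L$ for all $t$ and such that every $x\in L$ equals $x_t$ for some finite $t$. A generating algorithm, at each time step $t\ge 1$, receives $x_1,\ldots,x_t$ and outputs a string $z_t\in U$. $S_t$ denotes the set of distinct strings among $x_1,\ldots,x_t$. An algorithm $\mathcal{G}$ non-uniformly generates from $\mathcal{C}$ if for every index $i$ there is a finite number $t(L_i)$ such that for every enumeration of $L_i$ presented to $\mathcal{G}$, $z_t\in L_i\setminus S_t$ for all $t$ with $|S_t|\ge t(L_i)$. The generation time $t_{\mathcal{G}}(L_i)$ of an algorithm $\mathcal{G}$ for $L_i$ is the least such number (and $\infty$ if none exists). *)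

(* Defs.v *)
From Stdlib Require Import ClassicalEpsilon.
From mathcomp Require Import all_boot.
Set Implicit Arguments. Unset Strict Implicit. Unset Printing Implicit Defensive.

Definition infinite_lang (U : eqType) (L : U -> Prop) : Prop :=
  forall s : seq U, exists x, L x /\ x \notin s.

Definition countably_infinite (U : countType) : Prop :=
  exists f : nat -> U, injective f.

Definition algorithm (U : Type) := seq U -> U.

(* An enumeration of L: x k is the string x_{k+1} presented at time k+1. *)
Definition enumeration (U : Type) (L : U -> Prop) (x : nat -> U) : Prop :=
  (forall k, L (x k)) /\ (forall y, L y -> exists k, x k = y).

Definition prefix (U : Type) (x : nat -> U) (t : nat) : seq U := mkseq x t.

Definition S_t (U : eqType) (x : nat -> U) (t : nat) : seq U := undup (prefix x t).
Definition card_S (U : eqType) (x : nat -> U) (t : nat) : nat := size (S_t x t).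

Definition gen_works (U : eqType) (G : algorithm U) (L : U -> Prop) (T : nat) : Prop :=
  forall x, enumeration L x ->
  forall t, 1 <= t -> T <= card_S x t ->
    L (G (prefix x t)) /\ G (prefix x t) \notin S_t x t.

(* Generation time: the least working T (Some T), or infinity (None). *)
Definition is_gen_time (U : eqType) (G : algorithm U) (L : U -> Prop)
  (o : option nat) : Prop :=
  match o with
  | Some T => gen_works G L T /\ (forall T', T' < T -> ~ gen_works G L T')
  | None => forall T, ~ gen_works G L T
  end.

Definition gen_time (U : eqType) (G : algorithm U) (L : U -> Prop) : option nat :=
  epsilon (inhabits None) (is_gen_time G L).

Definition olt (a b : option nat) : Prop :=
  match a, b with
  | Some m, Some n => m < n
  | Some _, None => True
  | None, _ => False
  end.

Definition nonuniformly_generates (U : eqType) (A : algorithm U)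
  (C : nat -> U -> Prop) : Prop :=
  forall i, exists T, gen_works A (C i) T.

(* Main.v *)
Require Import Defs.
From mathcomp Require Import all_boot.
From Stdlib Require Import ClassicalEpsilon Classical.
Set Implicit Arguments. Unset Strict Implicit. Unset Printing Implicit Defensive.

Definition bP (P : Prop) : bool := if excluded_middle_informative P then true else false.
Lemma bPP (P : Prop) : reflect P (bP P).
Proof. rewrite /bP; case: excluded_middle_informative => h; by constructor. Qed.

Lemma gen_time_spec (U : eqType) (G : algorithm U) L : is_gen_time G L (gen_time G L).
Proof.
apply: epsilon_spec.
case: (classic (exists T, gen_works G L T)) => [ex|nex].
- have ex' : exists T, bP (gen_works G L T) by case: ex => T h; exists T; apply/bPP.
  case: (ex_minnP ex') => T /bPP hT hmin.
  exists (Some T); split => // T' hT' hw.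
  have := hmin T' (introT (bPP _) hw). by rewrite leqNgt hT'.
- exists None => T hT; apply: nex; by exists T.
Qed.

Lemma gen_time_works (U : eqType) (G : algorithm U) L T :
  gen_time G L = Some T -> gen_works G L T.
Proof. move=> h; have := gen_time_spec G L; rewrite h; by case. Qed.

Lemma gen_time_some (U : eqType) (G : algorithm U) L T :
  gen_works G L T -> exists T', gen_time G L = Some T' /\ T' <= T.
Proof.
move=> hw; have := gen_time_spec G L; case: (gen_time G L) => [T'|].
- move=> [_ hmin]; exists T'; split => //.
  rewrite leqNgt; apply/negP => hlt; exact: hmin _ hlt hw.
- move=> h; by case: (h T).
Qed.

Fixpoint lastP (p : nat -> bool) m := if p m then m else
  match m with 0 => 0 | m'.+1 => lastP p m' end.

Lemma lastPP (p : nat -> bool) m k : k <= m -> p k -> p (lastP p m) /\ k <= lastP p m.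
Proof.
elim: m => [|m IH] /=.
- rewrite leqn0 => /eqP -> h; by rewrite h.
- move=> hk pk; case hm: (p m.+1) => //.
  apply: IH => //. rewrite leq_eqVlt in hk; case/orP: hk => // /eqP e.
  by subst; rewrite pk in hm.
Qed.

Section Build.
Variables (U : countType) (C : nat -> U -> Prop) (n : nat).

Definition consb (s : seq U) j : Prop := forall y, y \in s -> C j y.
Definition Iset (G0 : algorithm U) s i : Prop :=
  i < n /\ consb s i /\ exists T, gen_time G0 (C i) = Some T /\ T <= size (undup s).
Definition Fset G0 s k j : Prop := (j < k /\ consb s j) \/ Iset G0 s j.
Definition Pk G0 s k : Prop := exists y, (forall j, Fset G0 s k j -> C j y) /\ y \notin s.
Definition Build (G0 : algorithm U) : algorithm U := fun s =>
  let p := fun k => bP (Pk G0 s k) in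
  let k := lastP p (size (undup s)) in
  if p k then epsilon (inhabits (G0 s)) (fun y => (forall j, Fset G0 s k j -> C j y) /\ y \notin s)
  else G0 s.

Lemma Fset_cons G0 s k j : Fset G0 s k j -> consb s j.
Proof. by case=> [[_ h]|[_ [h _]]]. Qed.

Lemma enum_cons L x t : enumeration (C L) x -> consb (Defs.prefix x t) L.
Proof.
move=> [hx _] y; rewrite /Defs.prefix /mkseq => /mapP [k _ ->]; exact: hx.
Qed.

Lemma build_a G0 i T : i < n -> gen_time G0 (C i) = Some T ->
  gen_works (Build G0) (C i) T.
Proof.
move=> hi hg x hx t ht hT.
have hc := enum_cons (t:=t) hx.
have II : Iset G0 (Defs.prefix x t) i by split => //; split => //; exists T.
rewrite /Build /=.
case: bPP => HP.
- have [HF Hy] := epsilon_spec (inhabits (G0 (Defs.prefix x t))) _ HP.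
  split; first by apply: HF; right.
  by rewrite /S_t mem_undup.
- exact: (gen_time_works hg) x hx t ht hT.
Qed.

Lemma build_b G0 k0 : exists T, gen_works (Build G0) (C k0) T.
Proof.
pose N := maxn k0.+1 n.
pose cover (F : {set 'I_N}) : seq U := epsilon (inhabits [::])
  (fun c => forall y, (forall j : 'I_N, j \in F -> C j y) -> y \in c).
pose d := \max_(F : {set 'I_N}) size (cover F).
exists (maxn d.+1 k0.+1) => x hx t ht hT.
set s := Defs.prefix x t.
have hc : consb s k0 := enum_cons (t:=t) hx.
move: hT; rewrite geq_max => /andP [hd hk].
have HP : Pk G0 s k0.+1.
  apply: NNPP => Hn.
  have Hall : forall y, (forall j, Fset G0 s k0.+1 j -> C j y) -> y \in s.
    move=> y hy; apply/negPn/negP => hy'; apply: Hn; by exists y.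
  pose Fs := [set j : 'I_N | bP (Fset G0 s k0.+1 j)].
  have ex : exists c : seq U, forall y, (forall j : 'I_N, j \in Fs -> C j y) -> y \in c.
    exists s => y hy; apply: Hall => j hj.
    have jN : j < N.
      case: hj => [[hj _]|[hj _]]; rewrite /N leq_max; apply/orP; [left|right];
        [exact: leq_trans hj (leqnn _)|exact: hj].
    apply: (hy (Ordinal jN)); rewrite inE; exact/bPP.
  have hcov := epsilon_spec (inhabits [::]) _ ex.
  have sub : {subset undup s <= cover Fs}.
    move=> z; rewrite mem_undup => hz; apply: hcov => j; rewrite inE => /bPP hj.
    exact: (Fset_cons hj).
  have h1 := uniq_leq_size (undup_uniq s) sub.
  have h2 : size (cover Fs) <= d by apply: (leq_bigmax Fs).
  have : size (undup s) <= d := leq_trans h1 h2.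
  rewrite leqNgt; move/negP; apply; exact: hd.
have [pk kle] := lastPP (p := fun k => bP (Pk G0 s k)) hk (introT (bPP _) HP).
rewrite /Build /=. rewrite -/s.
case: bPP => HP'.
- have [HF Hy] := epsilon_spec (inhabits (G0 s)) _ HP'.
  split; first by apply: HF; left; split.
  by rewrite /S_t mem_undup.
- by move/bPP: pk.
Qed.

End Build.

Fixpoint sumf (h : nat -> nat) m := match m with 0 => 0 | m'.+1 => sumf h m' + h m' end.

Lemma sumf_le f g m : (forall j, j < m -> f j <= g j) -> sumf f m <= sumf g m.
Proof.
elim: m => [|m IH] //= h. apply: leq_add; first by apply: IH => j hj; apply: h; exact: ltnW.
exact: h.
Qed.

Lemma sumf_lt f g m i : (forall j, j < m -> f j <= g j) -> i < m -> f i < g i ->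
  sumf f m < sumf g m.
Proof.
elim: m => [|m IH] //= h hi hfi.
have hle : forall j, j < m -> f j <= g j by move=> j hj; apply: h; exact: ltnW.
rewrite ltnS leq_eqVlt in hi; case/orP: hi => [/eqP e|hi].
- subst; rewrite -addnS; apply: leq_add => //; exact: sumf_le.
- rewrite -addSn; apply: leq_add; [exact: IH|exact: h].
Qed.

Theorem mainTheorem1 :
  forall (U : countType), countably_infinite U ->
  forall (C : nat -> U -> Prop), (forall i, infinite_lang (C i)) ->
  forall n : nat,
  exists A : algorithm U,
    nonuniformly_generates A C /\
    forall (G : algorithm U) (i : nat),
      i < n -> olt (gen_time G (C i)) (gen_time A (C i)) ->
      exists j, j < n /\ j <> i /\ olt (gen_time A (C j)) (gen_time G (C j)).
Proof.
move=> U [f _] C _ n.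
pose fin (G : algorithm U) := forall i, i < n -> gen_time G (C i) <> None.
pose tv (G : algorithm U) i := odflt 0 (gen_time G (C i)).
pose Q m := exists G, fin G /\ sumf (tv G) n = m.
have finB : forall G0, fin (Build C n G0).
  move=> G0 i _; have [T hT] := build_b C n G0 i.
  by have [T' [-> _]] := gen_time_some hT.
have exQ : exists m, bP (Q m).
  exists (sumf (tv (Build C n (fun _ => f 0))) n); apply/bPP.
  by exists (Build C n (fun _ => f 0)).
case: (ex_minnP exQ) => M /bPP [G0 [fG0 sG0]] hmin.
exists (Build C n G0); split; first by move=> i; exact: build_b.
set A := Build C n G0.
have hA : forall j, j < n -> exists a b, gen_time A (C j) = Some a /\
    gen_time G0 (C j) = Some b /\ a <= b.
  move=> j hj; case e: (gen_time G0 (C j)) => [b|]; last by case: (fG0 j hj).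
  have [a [ea le]] := gen_time_some (build_a hj e).
  by exists a, b.
move=> G i hi hlt.
apply: NNPP => Hn.
have hG : forall j, j < n -> exists g a, gen_time G (C j) = Some g /\
   gen_time A (C j) = Some a /\ (if j == i then g < a else g <= a).
  move=> j hj; have [a [b [ea [eb _]]]] := hA j hj.
  case: eqP => [e|ne].
  - subst j; move: hlt; rewrite ea.
    case: (gen_time G (C i)) => [g|] //= hg; by exists g, a.
  - case eg: (gen_time G (C j)) => [g|].
    + exists g, a; split => //; split => //; rewrite leqNgt; apply/negP => hga.
      apply: Hn; exists j; split => //; split => //; by rewrite ea eg.
    + exfalso; apply: Hn; exists j; split => //; split => //; by rewrite ea eg.
have finG : fin G by move=> j hj; have [g [a [-> _]]] := hG j hj.
have leGA : forall j, j < n -> tv G j <= tv A j.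
  move=> j hj; have [g [a [eg [ea h]]]] := hG j hj; rewrite /tv eg ea /=.
  by case: eqP h => // _ /ltnW.
have ltGA : tv G i < tv A i.
  have [g [a [eg [ea h]]]] := hG i hi; by rewrite /tv eg ea /= eqxx in h *.
have leAG0 : forall j, j < n -> tv A j <= tv G0 j.
  move=> j hj; have [a [b [ea [eb h]]]] := hA j hj; by rewrite /tv ea eb.
have s1 := sumf_lt leGA hi ltGA.
have s2 := sumf_le leAG0.
have s3 : M <= sumf (tv G) n by apply: hmin; apply/bPP; exists G.
have := leq_trans s1 s2; rewrite sG0 ltnNge s3 //.
Qed.
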